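(* Let $b>1$, let $(p,R,I)$ be proper with $I$ non-empty, and let $k$ be the greatest divisor of $p$ coprime with $b$. If two states $(s,t)$ and $(s',t')$ of $\mathcal{C}_{R,p,I}$ are Nerode-equivalent, then $s\equiv s'\pmod k$.
   Context: $A_b=\{0,\ldots,b-1\}$; for $u=u_\ell\cdots u_0$, $\mathrm{val}(u)=\sum_i u_ib^i$. Given $p\ge1$, $R\subseteq\{0,\ldots,p-1\}$ and a finite set $I\subseteq\mathbb{N}$, the set $S=(R+p\mathbb{N})\oplus I$ ($\oplus$ = symmetric difference). The triple $(p,R,I)$ is proper if $p$ is the smallest positive integer for which there exist $R',I'$ with $R'\subseteq\{0,\ldots,p-1\}$, $I'$ finite and $S=(R'+p\mathbb{N})\oplus I'$. $\mathcal{A}_{R,p}$: states $\{0,\ldots,p-1\}$, initial $0$, final $R$, transitions $n\xrightarrow{a}(nb+a)\bmod p$. With $m=\max I$, $\mathcal{B}_I$: states $\{0,\ldots,m\}\cup\{\bot\}$, initial $0$, final $I$, transitions $i\xrightarrow{a}ib+a$ if $ib+a\le m$, $i\xrightarrow{a}\bot$ otherwise, and $\bot\xrightarrow{a}\bot$. $\mathcal{C}_{R,p,I}$ is the accessible part of the product automaton of $\mathcal{A}_{R,p}$ and $\mathcal{B}_I$: states are pairs $(s,t)$ reachable from $(0,0)$, $(s,t)\xrightarrow{a}(s',t')$ iff $s\xrightarrow{a}s'$ and $t\xrightarrow{a}t'$, and $(s,t)$ is final iff exactly one of $s\in R$, $t\in I$ holds. Two states are Nerode-equivalent if for every word $u$,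 the states reached by reading $u$ from them are both final or both non-final. *)

(* Defs.v *)
From mathcomp Require Import all_boot.
Set Implicit Arguments. Unset Strict Implicit. Unset Printing Implicit Defensive.

(* Words over A_b are lists of digits, most significant digit first:
   u = u_l ... u_0 is the list [:: u_l; ...; u_0]. *)
Definition is_word (b : nat) (u : seq nat) : bool := all (fun a => a < b) u.

Definition val_word (b : nat) (u : seq nat) : nat := foldl (fun n a => n * b + a) 0 u.

(* Membership in S = (R + pN) (+) I, for R a subset of {0,..,p-1}
   (given as a list) and I a finite set of naturals (given as a list). *)
Definition inS (p : nat) (R I : seq nat) (n : nat) : bool :=
  ((n %% p) \in R) (+) (n \in I).

Definition proper_triple (p : nat) (R I : seq nat) : Prop :=
  [/\ 0 < p, all (fun r => r < p) R &
    forall (p' : nat) (R' I' : seq nat), 0 < p' -> all (fun r => r < p') R' ->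
      (forall n, inS p' R' I' n = inS p R I n) -> p <= p'].

Definition stepA (b p : nat) (s a : nat) : nat := (s * b + a) %% p.

(* Automaton B_I: states Some i (0 <= i <= m) and None (= bottom). *)
Definition maxI (I : seq nat) : nat := \max_(i <- I) i.

Definition stepB (b : nat) (I : seq nat) (t : option nat) (a : nat) : option nat :=
  match t with
  | Some i => if i * b + a <= maxI I then Some (i * b + a) else None
  | None => None
  end.

Definition stepC (b p : nat) (I : seq nat) (st : nat * option nat) (a : nat)
  : nat * option nat := (stepA b p st.1 a, stepB b I st.2 a).

Definition runC (b p : nat) (I : seq nat) (st : nat * option nat) (u : seq nat)
  : nat * option nat := foldl (stepC b p I) st u.

Definition finalC (R I : seq nat) (st : nat * option nat) : bool :=
  (st.1 \in R) (+) (if st.2 is Some i then i \in I else false).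

Definition initC : nat * option nat := (0, Some 0).

Definition stateC (b p : nat) (I : seq nat) (st : nat * option nat) : Prop :=
  exists u, is_word b u /\ runC b p I initC u = st.

Definition nerode_equiv (b p : nat) (R I : seq nat) (st st' : nat * option nat) : Prop :=
  forall u, is_word b u -> finalC R I (runC b p I st u) = finalC R I (runC b p I st' u).

Definition gcop (p b : nat) : nat := \max_(d < p.+1 | (d %| p) && coprime d b) d.

(* Main.v *)
Require Import Defs.
From mathcomp Require Import all_boot.
From mathcomp Require Import zify.

Fixpoint digs (b L v : nat) : seq nat :=
  match L with 0 => [::] | L'.+1 => rcons (digs b L' (v %/ b)) (v %% b) end.

Lemma val_rcons b w a : val_word b (rcons w a) = val_word b w * b + a.
Proof. by rewrite /val_word foldl_rcons. Qed.

Lemma digs_prop b L v : 0 < b -> v < b ^ L ->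
  [/\ is_word b (digs b L v), size (digs b L v) = L & val_word b (digs b L v) = v].
Proof.
move=> b0; elim: L v => [|L IH] v /=.
  by rewrite expn0 ltnS leqn0 => /eqP ->.
move=> hv.
have hv' : v %/ b < b ^ L by rewrite ltn_divLR // -expnSr.
have [h1 h2 h3] := IH _ hv'.
split.
- by rewrite /is_word all_rcons ltn_pmod.
- by rewrite size_rcons h2.
- by rewrite val_rcons h3 -divn_eq.
Qed.

Lemma runC_split b p I st w :
  runC b p I st w = (foldl (stepA b p) st.1 w, foldl (stepB b I) st.2 w).
Proof.
rewrite /runC; elim: w st => [|a w IH] [x y] //=.
Qed.

Lemma stepA_fold b p s w :
  foldl (stepA b p) s w = s * b ^ size w + val_word b w %[mod p].
Proof.
elim/last_ind: w => [|w a IH] /=.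
  by rewrite expn0 muln1 addn0.
rewrite foldl_rcons size_rcons val_rcons /stepA modn_mod.
rewrite -modnDml -modnMml IH modnMml modnDml.
congr (_ %% p).
rewrite expnSr mulnDl mulnA addnA; done.
Qed.

Lemma stepA_fold2 b p s w : 0 < size w ->
  foldl (stepA b p) s w = (s * b ^ size w + val_word b w) %% p.
Proof.
case/lastP: w => [|w a] // _.
by rewrite -stepA_fold foldl_rcons /stepA modn_mod.
Qed.

Lemma stepB_fold b I w t j : foldl (stepB b I) t w = Some j ->
  val_word b w <= j /\ (w = [::] \/ j <= maxI I).
Proof.
elim/last_ind: w t j => [|w a IH] t j /=.
  by move=> _; split; [done | left].
rewrite foldl_rcons.
case E: (foldl _ t w) => [i|] //=.
case: ifP => // H [<-].
have [H1 _] := IH _ _ E.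
split; last by right.
by rewrite val_rcons leq_add2r leq_mul2r H1 orbT.
Qed.

Theorem proposition40 (b p : nat) (R I : seq nat) (s s' : nat) (t t' : option nat) :
  1 < b -> proper_triple p R I -> I != [::] ->
  stateC b p I (s, t) -> stateC b p I (s', t') ->
  nerode_equiv b p R I (s, t) (s', t') ->
  s = s' %[mod gcop p b].
Proof.
move=> b1 [p0 Rlt Hmin] _ _ _ Hn.
have b0 : 0 < b by apply: ltnW.
set m := maxI I.
set L := m + p.
have bL : m + p < b ^ L by apply: ltn_expl.
pose f y := (y %% p) \in R.
set c := s * b ^ L.
set c' := s' * b ^ L.
have key : forall v, b ^ L - p <= v < b ^ L -> f (c + v) = f (c' + v).
  move=> v /andP[v1 v2].
  have [Hw Hs Hv] := (digs_prop _ _ _ b0 v2).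
  have := Hn _ Hw.
  have noneB : forall t0,
      (if foldl (stepB b I) t0 (digs b L v) is Some i then i \in I else false) = false.
    move=> t0; case E: (foldl _ t0 _) => [j|] //; exfalso.
    have [h1 [h2|h2]] := (stepB_fold _ _ _ _ _ E).
      by move: Hs; rewrite h2 /= /L; lia.
    by move: h1 h2 v1 bL; rewrite Hv /m; lia.
  rewrite !runC_split /finalC /= !noneB !addbF.
  by rewrite /f -/c -/c' !stepA_fold2 Hs ?Hv // /L; lia.

have key2 : forall x, f (c + x) = f (c' + x).
  move=> x.
  set B := b ^ L - p.
  set v := B + (x + p - B %% p) %% p.
  have Hvx : v %% p = x %% p.
    rewrite /v modnDmr -modnDml addnBA; last first.
      by apply: leq_trans (ltnW (ltn_pmod _ p0)) (leq_addl _ _).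
    by rewrite addnC addnK modnDr.
  have vr : B <= v < b ^ L.
    apply/andP; split; first exact: leq_addr.
    have := ltn_pmod (x + p - B %% p) p0.
    rewrite /v /B; lia.
  by rewrite /f -[(c + x) %% p]modnDmr -[(c' + x) %% p]modnDmr -Hvx !modnDmr; exact: key vr.
set e := c' + (p - c %% p).
have per_e : forall y, f (y + e) = f y.
  move=> y.
  have cp := ltn_pmod c p0.
  have E1 : c + (y + (p - c %% p)) = y + (c %/ p).+1 * p.
    have := divn_eq c p; lia.
  have E2 : c' + (y + (p - c %% p)) = y + e by rewrite /e; lia.
  rewrite -E2 -key2 E1 /f.
  by rewrite addnC modnMDl.
have per_ae : forall a y, f (y + a * e) = f y.
  elim=> [|a IH] y; first by rewrite mul0n addn0.
  by rewrite mulSn addnCA addnC per_e IH.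
set g := gcdn p e.
have per_g : forall y, f (y + g) = f y.
  move=> y.
  have [a _ Ha] := Bezoutl e p0.
  rewrite -(per_ae a) -addnA /f -modnDmr.
  by rewrite (eqP Ha) addn0.
have per_qg : forall q y, f (y + q * g) = f y.
  elim=> [|q IH] y; first by rewrite mul0n addn0.
  by rewrite mulSn addnCA addnC per_g IH.
have g0 : 0 < g by rewrite gcdn_gt0 p0.
have gp : g <= p by apply: dvdn_leq p0 (dvdn_gcdl _ _).
have pg : p <= g.
  apply: (Hmin g [seq r <- iota 0 g | r \in R] I g0).
    by apply/allP => r; rewrite mem_filter mem_iota => /andP[_ /andP[_ h]].
  move=> n; rewrite /inS; congr (_ (+) _).
  rewrite mem_filter mem_iota /= add0n ltn_pmod // andbT.
  have := per_qg (n %/ g) (n %% g).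
  rewrite addnC -divn_eq /f => ->.
  by rewrite (modn_small (leq_trans (ltn_pmod _ g0) gp)).
have gE : g = p by apply/eqP; rewrite eqn_leq gp pg.
have pe : p %| e by rewrite -gE dvdn_gcdr.
have cc : c' = c %[mod p].
  have h1 : (e + c %% p) %% p = c %% p by rewrite -modnDml (eqP pe) add0n modn_mod.
  rewrite -h1 /e -addnA subnK ?(ltnW (ltn_pmod _ p0)) //.
  by rewrite modnDr.
set k := gcop p b.
have kP : (k == 0) || ((k %| p) && coprime k b).
  rewrite /k /gcop; apply: (big_ind (fun x => (x == 0) || ((x %| p) && coprime x b))) => //.
  - by move=> x y hx hy; rewrite /maxn; case: ifP.
  - by move=> i ->; rewrite orbT.
have k0 : 0 < k.
  have h1 : 1 < p.+1 by rewrite ltnS.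
  have := @leq_bigmax_cond _ (fun d : 'I_p.+1 => (d %| p) && coprime d b) (fun d => nat_of_ord d) (Ordinal h1).
  by rewrite /= dvd1n coprime1n => /(_ isT).
have [kp kb] : (k %| p) /\ coprime k b.
  have kn0 : (k == 0) = false by apply/negbTE; rewrite -lt0n.
  by move: kP; rewrite kn0 /= => /andP.
have ck : c' = c %[mod k] by rewrite -(modn_dvdm c' kp) -(modn_dvdm c kp) cc.
have kbL : coprime k (b ^ L) by rewrite coprimeXr.
apply/eqP.
case: (leqP s s') => hs.
  rewrite eq_sym eqn_mod_dvd // -(Gauss_dvdl _ kbL) mulnBl -eqn_mod_dvd.
    by rewrite -/c -/c' ck.
  by rewrite leq_mul2r hs orbT.
rewrite eqn_mod_dvd ?(ltnW hs) // -(Gauss_dvdl _ kbL) mulnBl -eqn_mod_dvd.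
  by rewrite -/c -/c' ck.
by rewrite leq_mul2r (ltnW hs) orbT.
Qed.
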